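(* Let $\mathcal H$ be the cyclotomic Hecke algebra (Ariki–Koike algebra) defined in the context, and let $T_0,T_1,\dots,T_{n-1}\in\mathrm{End}_{\mathbb K}(V^{\otimes n})$ be the operators defined in the context. Then there is a (unique) $\mathbb K$-algebra homomorphism $\Phi:\mathcal H\to\mathrm{End}_{\mathbb K}(V^{\otimes n})$ with $\Phi(g_a)=T_a$ for $a=0,1,\dots,n-1$; that is, $g_a\mapsto T_a$ defines a (super) representation of $\mathcal H$ on $V^{\otimes n}$.
   Context: Let $m,n\ge 1$ and $\mathbb K=\mathbb C(q,Q_1,\dots,Q_m)$, the field of rational functions in indeterminates $q,Q_1,\dots,Q_m$. The cyclotomic Hecke algebra $\mathcal H$ of type $G(m,1,n)$ is the unital associative $\mathbb K$-algebra generated by $g_0,g_1,\dots,g_{n-1}$ subject to: $(g_0-Q_1)\cdots(g_0-Q_m)=0$; $g_0g_1g_0g_1=g_1g_0g_1g_0$; $g_i^2=(q-q^{-1})g_i+1$ for $1\le i\le n-1$; $g_ig_j=g_jg_i$ for $0\le i,j\le n-1$ with $|i-j|\ge 2$; $g_ig_{i+1}g_i=g_{i+1}g_ig_{i+1}$ for $1\le i\le n-2$. Fix nonnegative integers $k_1,\dots,k_m,\ell_1,\dots,\ell_m$ with $N=\sum_{c=1}^m(k_c+\ell_c)>0$. Let $V$ be a $\mathbb K$-superspace with homogeneous basis $\{v^{(c)}_a:1\le c\le m,\ 1\le a\le k_c+\ell_c\}$, where $v^{(c)}_a$ is even if $a\le k_c$ and odd if $a>k_c$; $v^{(c)}_a$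 is said to have colour $c$. Totally order this basis by $v^{(c)}_a<v^{(c')}_b$ iff $c<c'$, or $c=c'$ and $a<b$, and write it as $u_1<u_2<\cdots<u_N$. Let $\bar j\in\{0,1\}$ denote the parity of $u_j$ and $\mathrm{col}(j)$ its colour. For $\mathbf i=(i_1,\dots,i_n)\in\{1,\dots,N\}^n$ we also write $\mathbf i$ for the basis vector $u_{i_1}\otimes\cdots\otimes u_{i_n}$ of $V^{\otimes n}$, put $c_t(\mathbf i)=\mathrm{col}(i_t)$, and for $1\le a\le n-1$ let $\mathbf i s_a$ be $\mathbf i$ with the $a$-th and $(a+1)$-th entries interchanged. Define $\mathbb K$-linear operators on $V^{\otimes n}$ on basis vectors by: $s_a(\mathbf i)=(-1)^{\bar i_a}\mathbf i$ if $i_a=i_{a+1}$, and $s_a(\mathbf i)=(-1)^{\bar i_a\bar i_{a+1}}\mathbf i s_a$ if $i_a\ne i_{a+1}$; $T_a(\mathbf i)=(q-q^{-1})\mathbf i+(-1)^{\bar i_a\bar i_{a+1}}\mathbf i s_a$ if $i_a<i_{a+1}$; $T_a(\mathbf i)=\frac{(q-q^{-1})+(-1)^{\bar i_a}(q+q^{-1})}{2}\mathbf i$ if $i_a=i_{a+1}$; $T_a(\mathbf i)=(-1)^{\bar i_a\bar i_{a+1}}\mathbf i s_a$ if $i_a>i_{a+1}$; $S_a(\mathbf i)=T_a(\mathbf i)$ if $c_a(\mathbf i)=c_{a+1}(\mathbf i)$ and $S_a(\mathbf i)=s_a(\mathbf i)$ otherwise; $S_0(\mathbf i)=Q_{c_1(\mathbf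 i)}\mathbf i$; $\theta=S_{n-1}\cdots S_1$ (composition of operators); and $T_0=T_1^{-1}\cdots T_{n-1}^{-1}\,\theta\, S_0$ (each $T_a$, $1\le a\le n-1$, is invertible). *)

(* Defs.v *)
From HB Require Import structures.
From mathcomp Require Import all_boot all_algebra all_fingroup.
From mathcomp Require Import complex.
From mathcomp Require Import Rstruct.
From mathcomp Require Import mpoly.

Set Implicit Arguments.
Unset Strict Implicit.
Unset Printing Implicit Defensive.

Import GRing.Theory.
Local Open Scope ring_scope.

(* The ground field  K = C(q, Q_1, ..., Q_m).                              *)
(* C = complex numbers R[i] over the Stdlib reals; the indeterminates are  *)
(* 'X_0 = q and 'X_c = Q_c (c = 1..m) in {mpoly C[m.+1]}, and K is the     *)
(* fraction field of this polynomial ring.                                 *)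
Definition CC : fieldType := complex Rdefinitions.R.
Definition KK (m : nat) : fieldType := {fraction {mpoly CC[m.+1]}}.
Definition qK (m : nat) : KK m := FracField.tofrac ('X_(@ord0 m)).
(* the indeterminate Q_{c+1}, for c : 'I_m  (0-based colour c <-> paper's c+1) *)
Definition QK (m : nat) (c : 'I_m) : KK m := FracField.tofrac ('X_(lift ord0 c)).

Section Relations.
Variables (K : fieldType) (q : K) (m : nat) (Q : 'I_m -> K) (n : nat).

(* The relations are stated in any ring B together with the map sc : K -> B *)
(* giving the scalars (sc c = c 1_B for a K-algebra B).                     *)
Definition HeckeRelR (B : pzRingType) (sc : K -> B) (X : 'I_n -> B) : Prop :=
  [/\
      forall a0 : 'I_n, val a0 = 0%N -> \prod_(c < m) (X a0 - sc (Q c)) = 0,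
      forall a0 a1 : 'I_n, val a0 = 0%N -> val a1 = 1%N ->
        X a0 * X a1 * X a0 * X a1 = X a1 * X a0 * X a1 * X a0,
      forall a : 'I_n, (0 < val a)%N -> X a * X a = sc (q - q^-1) * X a + 1,
      forall a b : 'I_n, (val a + 2 <= val b)%N || (val b + 2 <= val a)%N ->
        X a * X b = X b * X a
    &
      forall a b : 'I_n, (0 < val a)%N -> val b = (val a + 1)%N ->
        X a * X b * X a = X b * X a * X b].

Definition HeckeRel (B : lalgType K) (X : 'I_n -> B) : Prop :=
  HeckeRelR (fun c : K => c%:A) X.

Definition is_Hecke_presentation (A : lalgType K) (g : 'I_n -> A) : Prop :=
  HeckeRel g /\
  forall (B : lalgType K) (h : 'I_n -> B), HeckeRel h ->
    exists f : {lrmorphism A -> B},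
      (forall a, f (g a) = h a) /\
      forall f' : {lrmorphism A -> B}, (forall a, f' (g a) = h a) -> f' =1 f.
End Relations.

Definition is_alg_hom (K : fieldType) (A : lalgType K) (d : nat)
    (f : A -> 'M[K]_d) : Prop :=
  [/\ f 1 = 1%:M,
      forall x y, f (x * y) = f x *m f y,
      forall x y, f (x + y) = f x + f y
    & forall (c : K) x, f (c *: x) = c *: f x].

Section Operators.
Variables (K : fieldType) (q : K) (m : nat) (Q : 'I_m -> K)
          (k l : 'I_m -> nat) (n : nat).

(* Basis of V: v^{(c)}_a  <->  (c ; a) with a : 'I_(k c + l c)            *)
(* (0-based a; the paper's index is a+1).  Colour = tag.                   *)
Definition vbasis := {c : 'I_m & 'I_(k c + l c)}.

(* parity: v^{(c)}_{a+1} is odd iff a+1 > k_c, i.e. k_c <= a *)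
Definition vodd (x : vbasis) : bool := (k (tag x) <= val (tagged x))%N.

Definition vcol (x : vbasis) : 'I_m := tag x.

Definition vlt (x y : vbasis) : bool :=
  (val (tag x) < val (tag y))%N ||
  ((tag x == tag y) && (val (tagged x) < val (tagged y))%N).

(* basis vectors of V^{(x) n}: words i = (i_1, ..., i_n) *)
Definition word := {ffun 'I_n -> vbasis}.

(* For a : 'I_n with 1 <= a (the generator index a), the paper's positions *)
(* a and a+1 are the 0-based positions a-1 and a.                          *)
Definition predo (a : 'I_n) : 'I_n :=
  Ordinal (leq_ltn_trans (leq_pred a) (ltn_ord a)).

Definition wswap (a : 'I_n) (i : word) : word :=
  [ffun t => i (tperm (predo a) a t)].

Definition sgn (b : bool) : K := if b then -1 else 1.

Definition delta (j : word) : word -> K := fun z => (z == j)%:R.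

(* images of basis vectors: img i is the coordinate vector of X(i) *)
Definition s_img (a : 'I_n) (i : word) : word -> K :=
  let x := i (predo a) in let y := i a in
  if x == y then fun z => sgn (vodd x) * delta i z
  else fun z => sgn (vodd x && vodd y) * delta (wswap a i) z.

Definition T_img (a : 'I_n) (i : word) : word -> K :=
  let x := i (predo a) in let y := i a in
  if vlt x y then
    fun z => (q - q^-1) * delta i z + sgn (vodd x && vodd y) * delta (wswap a i) z
  else if x == y then
    fun z => ((q - q^-1) + sgn (vodd x) * (q + q^-1)) / 2%:R * delta i z
  else fun z => sgn (vodd x && vodd y) * delta (wswap a i) z.

Definition S_img (a : 'I_n) (i : word) : word -> K :=
  if vcol (i (predo a)) == vcol (i a) then T_img a i else s_img a i.

(* S_0(i) = Q_{c_1(i)} i ; p0 is the first position *)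
Definition S0_img (p0 : 'I_n) (i : word) : word -> K :=
  fun z => Q (vcol (i p0)) * delta i z.

(* End_K(V^{(x) n}) = square matrices indexed by the words (enumerated by *)
(* enum_val); column j of the matrix is the coordinate vector of X(e_j),   *)
(* so that matrix product is composition of operators.                     *)
Definition wdim : nat := #|{: word}|.

Definition opmx (img : word -> word -> K) : 'M[K]_wdim :=
  \matrix_(r < wdim, s < wdim) img (enum_val s) (enum_val r).

Definition s_op (a : 'I_n) : 'M[K]_wdim := opmx (s_img a).
Definition T_op (a : 'I_n) : 'M[K]_wdim := opmx (T_img a).
Definition S_op (a : 'I_n) : 'M[K]_wdim := opmx (S_img a).
Definition S0_op (p0 : 'I_n) : 'M[K]_wdim := opmx (S0_img p0).

Definition theta_op : 'M[K]_wdim :=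
  \big[mulmx/1%:M]_(a <- rev (enum 'I_n) | (0 < val a)%N) S_op a.

Definition T0_op (p0 : 'I_n) : 'M[K]_wdim :=
  (\big[mulmx/1%:M]_(a <- enum 'I_n | (0 < val a)%N) invmx (T_op a))
    *m theta_op *m S0_op p0.

Definition Tgen (a : 'I_n) : 'M[K]_wdim :=
  if val a == 0%N then T0_op a else T_op a.

End Operators.

(* Main.v *)
Require Import Defs.
From HB Require Import structures.
From mathcomp Require Import all_boot all_algebra all_fingroup.
From mathcomp Require Import complex.
From mathcomp Require Import Rstruct.
From mathcomp Require Import mpoly.
From mathcomp Require Import zify ring lra.
Set Implicit Arguments.
Unset Strict Implicit.
Unset Printing Implicit Defensive.
Import GRing.Theory.
Local Open Scope ring_scope.

Section Gen.
Variables (K : fieldType) (q : K) (m : nat) (Q : 'I_m -> K) (k l : 'I_m -> nat) (n : nat).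
Local Notation word := (word k l n).
Local Notation vb := (Defs.vbasis k l).
Local Notation wdim := (wdim k l n).
Local Notation delta := (delta K).

Definition op := word -> word -> K.
Definition ocomp (f g : op) : op := fun i z => \sum_w g i w * f w z.

Lemma opmxM (f g : op) : opmx f *m opmx g = opmx (ocomp f g).
Proof.
apply/matrixP=> r s; rewrite !mxE /ocomp.
rewrite (reindex (@enum_val word (@predT word))) /=; last first.
  by apply: onW_bij; apply: enum_val_bij.
apply: eq_bigr => t _; rewrite !mxE mulrC.
done.
Qed.

Lemma opmx_ext (f g : op) : (forall i z, f i z = g i z) -> opmx f = opmx g.
Proof. by move=> H; apply/matrixP=> r s; rewrite !mxE H. Qed.

Lemma sum_delta (j : word) (F : word -> K) : \sum_w delta j w * F w = F j.
Proof.
rewrite (bigD1 j) //= /delta eqxx mul1r big1 ?addr0 // => w /negbTE ->.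
by rewrite mul0r.
Qed.

Lemma sum_delta2 (j : word) (F : word -> K) : \sum_w F w * delta w j = F j.
Proof.
rewrite (bigD1 j) //= /delta eqxx mulr1 big1 ?addr0 // => w hw.
by rewrite eq_sym (negbTE hw) mulr0.
Qed.

Lemma scalar_opmx (c : K) : c%:M = opmx (fun i z => c * delta i z) :> 'M_wdim.
Proof.
apply/matrixP=> r s; rewrite !mxE /delta (inj_eq enum_val_inj) mulr_natr.
done.
Qed.

Lemma opmxD (f g : op) : opmx f + opmx g = opmx (fun i z => f i z + g i z).
Proof. by apply/matrixP=> r s; rewrite !mxE. Qed.

Lemma opmxN (f : op) : - opmx f = opmx (fun i z => - f i z).
Proof. by apply/matrixP=> r s; rewrite !mxE. Qed.

Definition loc2 (A B : vb -> vb -> K) (a : 'I_n) : op := fun i z =>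
  A (i (predo a)) (i a) * delta i z + B (i (predo a)) (i a) * delta (wswap a i) z.

Lemma ocomp_loc2 f A B a i z : ocomp f (loc2 A B a) i z =
  A (i (predo a)) (i a) * f i z + B (i (predo a)) (i a) * f (wswap a i) z.
Proof.
rewrite /ocomp /loc2.
under eq_bigr do rewrite mulrDl -!mulrA.
by rewrite big_split /= -!mulr_sumr !sum_delta.
Qed.

Definition diag (f : word -> K) : op := fun i z => f i * delta i z.

Lemma ocomp_diagR g f i z : ocomp g (diag f) i z = f i * g i z.
Proof.
rewrite /ocomp /diag; under eq_bigr do rewrite -mulrA.
by rewrite -mulr_sumr sum_delta.
Qed.

Lemma ocomp_diagL f g i z : ocomp (diag f) g i z = g i z * f z.
Proof.
rewrite /ocomp /diag; under eq_bigr do rewrite mulrA.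
by rewrite sum_delta2.
Qed.

End Gen.

Section Words.
Variables (m : nat) (k l : 'I_m -> nat) (n : nat).
Local Notation word := (word k l n).

Lemma val_predo (a : 'I_n) : (predo a : nat) = a.-1.
Proof. by []. Qed.

Lemma predo_neq (a : 'I_n) : (0 < a)%N -> predo a != a.
Proof. by move=> ha; apply/eqP => /(congr1 val) /=; lia. Qed.

Lemma predoS (a b : 'I_n) : (b : nat) = a.+1 -> predo b = a.
Proof. by move=> hb; apply: val_inj; rewrite /= hb. Qed.

Lemma wswapE (a : 'I_n) (i : word) t : wswap a i t = i (tperm (predo a) a t).
Proof. by rewrite ffunE. Qed.

Lemma wswap_p (a : 'I_n) (i : word) : wswap a i (predo a) = i a.
Proof. by rewrite wswapE tpermL. Qed.

Lemma wswap_a (a : 'I_n) (i : word) : wswap a i a = i (predo a).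
Proof. by rewrite wswapE tpermR. Qed.

Lemma wswap_o (a : 'I_n) (i : word) t : t != predo a -> t != a -> wswap a i t = i t.
Proof. by move=> h1 h2; rewrite wswapE tpermD // eq_sym. Qed.

Lemma wswapK (a : 'I_n) (i : word) : wswap a (wswap a i) = i.
Proof. by apply/ffunP=> t; rewrite !wswapE tpermK. Qed.

Lemma wswap_id (a : 'I_n) (i : word) : i (predo a) = i a -> wswap a i = i.
Proof.
move=> h; apply/ffunP=> t; rewrite wswapE.
case: (tpermP (predo a) a t) => [->|->|//]; by rewrite h.
Qed.

Ltac simpl_eqs := repeat match goal with
 | H : is_true (?x != ?y) |- context [?x == ?y] => rewrite (negbTE H)
 | H : is_true (?x != ?y) |- context [?y == ?x] => rewrite [y == x]eq_sym (negbTE H)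
 | |- context [?x == ?x] => rewrite eqxx
 end.

Lemma wswapC (a b : 'I_n) (i : word) : (0 < a)%N -> (0 < b)%N ->
  [&& predo a != predo b, predo a != b, a != predo b & a != b] ->
  wswap a (wswap b i) = wswap b (wswap a i).
Proof.
move=> /predo_neq h5 /predo_neq h6.
case/and4P=> h1 h2 h3 h4; apply/ffunP=> t; rewrite !wswapE !permE /=.
have [?|hp] := eqVneq t (predo a); [try subst t|]; simpl_eqs; try done.
have [?|hA] := eqVneq t a; [try subst t|]; simpl_eqs; try done.
have [?|hp'] := eqVneq t (predo b); [try subst t|]; simpl_eqs; try done.
have [?|hB] := eqVneq t b; [try subst t|]; simpl_eqs; try done.
Qed.

Section Three.
Variables (a b : 'I_n).
Hypotheses (ha : (0 < a)%N) (hb : (b : nat) = a.+1).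

Lemma pb : predo b = a. Proof. exact: predoS. Qed.
Lemma neq_pa : predo a != a. Proof. exact: predo_neq. Qed.
Lemma neq_pb : predo a != b. Proof. by apply/eqP=> /(congr1 val) /=; lia. Qed.
Lemma neq_ab : a != b. Proof. by apply/eqP=> /(congr1 val) /=; lia. Qed.

Lemma sa_p (w : word) : wswap a w (predo a) = w a. Proof. exact: wswap_p. Qed.
Lemma sa_a (w : word) : wswap a w a = w (predo a). Proof. exact: wswap_a. Qed.
Lemma sa_b (w : word) : wswap a w b = w b.
Proof. by rewrite wswap_o // eq_sym ?neq_pb ?neq_ab. Qed.
Lemma sb_p (w : word) : wswap b w (predo a) = w (predo a).
Proof. by rewrite wswap_o ?pb ?neq_pa ?neq_pb. Qed.
Lemma sb_a (w : word) : wswap b w a = w b.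
Proof. by rewrite wswapE pb tpermL. Qed.
Lemma sb_b (w : word) : wswap b w b = w a.
Proof. by rewrite wswapE pb tpermR. Qed.

Lemma wbraid (i : word) : wswap b (wswap a (wswap b i)) = wswap a (wswap b (wswap a i)).
Proof.
have npa := neq_pa; have npb := neq_pb; have nab := neq_ab.
apply/ffunP=> t; rewrite !wswapE. rewrite !pb !permE /=.
have [?|hp] := eqVneq t (predo a); [try subst t|]; simpl_eqs; try done.
have [?|hA] := eqVneq t a; [try subst t|]; simpl_eqs; try done.
have [?|hB] := eqVneq t b; [try subst t|]; simpl_eqs; try done.
Qed.

Definition agree3 (z w : word) :=
  [forall t, [&& t != predo a, t != a & t != b] ==> (z t == w t)].

Lemma eq_word3 (z w : word) : (z == w) =
  [&& agree3 z w, z (predo a) == w (predo a), z a == w a & z b == w b].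
Proof.
apply/eqP/and4P => [->|[/forallP H /eqP h1 /eqP h2 /eqP h3]].
  by rewrite !eqxx; split=> //; apply/forallP=> t; apply/implyP.
apply/ffunP=> t; have := H t.
have [->|hp] := eqVneq t (predo a) => //.
have [->|hA] := eqVneq t a => //.
have [->|hB] := eqVneq t b => //.
by move/eqP.
Qed.

Lemma agree3_a z w : agree3 z (wswap a w) = agree3 z w.
Proof.
apply: eq_forallb => t; apply/implyP/implyP => H /and3P[h1 h2 h3].
  by rewrite -(wswap_o w h1 h2) H // h1 h2 h3.
by rewrite (wswap_o w h1 h2) H // h1 h2 h3.
Qed.

Lemma agree3_b z w : agree3 z (wswap b w) = agree3 z w.
Proof.
have e1 t : t != a -> t != b -> wswap b w t = w t.
  by move=> h1 h2; rewrite wswap_o // pb.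
apply: eq_forallb => t; apply/implyP/implyP => H /and3P[h1 h2 h3].
  by rewrite -(e1 t h2 h3) H // h1 h2 h3.
by rewrite (e1 t h2 h3) H // h1 h2 h3.
Qed.
End Three.

Section Two.
Variables (a : 'I_n).
Hypotheses (ha : (0 < a)%N).
Definition agree2 (z w : word) :=
  [forall t, [&& t != predo a & t != a] ==> (z t == w t)].

Lemma eq_word2 (z w : word) : (z == w) =
  [&& agree2 z w, z (predo a) == w (predo a) & z a == w a].
Proof.
apply/eqP/and3P => [->|[/forallP H /eqP h1 /eqP h2]].
  by rewrite !eqxx; split=> //; apply/forallP=> t; apply/implyP.
apply/ffunP=> t; have := H t.
have [->|hp] := eqVneq t (predo a) => //.
have [->|hA] := eqVneq t a => //.
by move/eqP.
Qed.

Lemma agree2_a z w : agree2 z (wswap a w) = agree2 z w.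
Proof.
apply: eq_forallb => t; apply/implyP/implyP => H /andP[h1 h2].
  by rewrite -(wswap_o w h1 h2) H // h1 h2.
by rewrite (wswap_o w h1 h2) H // h1 h2.
Qed.
End Two.
End Words.

Section Coef.
Variables (m : nat) (k l : 'I_m -> nat).
Local Notation vb := (Defs.vbasis k l).

Definition cn (x : vb) : nat := val (tag x).
Definition an (x : vb) : nat := val (tagged x).

Lemma vb_eq (x y : vb) : cn x = cn y -> an x = an y -> x = y.
Proof.
case: x => cx ax; case: y => cy ay; rewrite /cn /an /= => h1.
have ec : cx = cy by apply: val_inj.
subst cy => h2; congr existT; exact: val_inj.
Qed.

Lemma vb_eqE (x y : vb) : (x == y) = (cn x == cn y) && (an x == an y).
Proof.
apply/eqP/andP => [->|[/eqP h1 /eqP h2]]; first by rewrite !eqxx.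
exact: vb_eq.
Qed.

Lemma vcol_eqE (x y : vb) : (vcol x == vcol y) = (cn x == cn y).
Proof. by rewrite /vcol /cn val_eqE. Qed.

Lemma vltE (x y : vb) : vlt x y = (cn x < cn y)%N || ((cn x == cn y) && (an x < an y))%N.
Proof. by rewrite /vlt -vcol_eqE. Qed.

Variant cmp_spec (x : vb) : vb -> bool -> bool -> bool -> bool -> bool -> bool -> Prop :=
| CLtC y of (cn x < cn y)%N : cmp_spec x y true false false false false false
| CLtA y of cn x = cn y & (an x < an y)%N : cmp_spec x y true false false false true true
| CGtC y of (cn y < cn x)%N : cmp_spec x y false true false false false false
| CGtA y of cn x = cn y & (an y < an x)%N : cmp_spec x y false true false false true true
| CEq : cmp_spec x x false false true true true true.

Lemma cmpP (x y : vb) : cmp_spec x y (vlt x y) (vlt y x) (x == y) (y == x)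
  (vcol x == vcol y) (vcol y == vcol x).
Proof.
rewrite !vltE !vb_eqE !vcol_eqE.
case: (ltngtP (cn x) (cn y)) => h.
- by constructor.
- by constructor.
move: h => h /=.
case: (ltngtP (an x) (an y)) => h'.
- by constructor.
- by constructor.
by rewrite (vb_eq h h'); constructor.
Qed.
End Coef.

Section Coef2.
Variables (K : fieldType) (q : K) (m : nat) (k l : 'I_m -> nat) (n : nat).
Local Notation vb := (Defs.vbasis k l).
Local Notation word := (word k l n).
Local Notation sgn := (sgn K).

Definition dd (x : vb) : K := ((q - q^-1) + sgn (vodd x) * (q + q^-1)) / 2%:R.
Definition AT (x y : vb) : K := if vlt x y then q - q^-1 else if x == y then dd x else 0.
Definition BT (x y : vb) : K :=
  if vlt x y then sgn (vodd x && vodd y) else if x == y then 0 else sgn (vodd x && vodd y).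
Definition AS (x y : vb) : K :=
  if vcol x == vcol y then AT x y else if x == y then sgn (vodd x) else 0.
Definition BS (x y : vb) : K :=
  if vcol x == vcol y then BT x y else if x == y then 0 else sgn (vodd x && vodd y).

Lemma T_loc2 (a : 'I_n) (i z : word) : T_img q a i z = loc2 AT BT a i z.
Proof.
rewrite /T_img /loc2 /AT /BT /=.
case: ifP => h1 //; case: ifP => h2 //; by rewrite mul0r ?addr0 ?add0r.
Qed.

Lemma S_loc2 (a : 'I_n) (i z : word) : S_img q a i z = loc2 AS BS a i z.
Proof.
rewrite /S_img /AS /BS /loc2 /=; case: ifP => hc; first by rewrite T_loc2.
rewrite /s_img /=; case: ifP => h; by rewrite mul0r ?addr0 ?add0r.
Qed.

Lemma T_opE (a : 'I_n) : T_op q k l a = opmx (loc2 AT BT a).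
Proof. exact/opmx_ext/T_loc2. Qed.
Lemma S_opE (a : 'I_n) : S_op q k l a = opmx (loc2 AS BS a).
Proof. exact/opmx_ext/S_loc2. Qed.

End Coef2.

Ltac prune := try (exfalso; lia).
Ltac revall y := repeat match goal with H : context[y] |- _ => revert H end.
Ltac cmpxy x y := revall y; case: (cmpP x y) => {y} [y|y|y|y|]; intros; prune.
Ltac cases3 x y w :=
  cmpxy x y; try cmpxy y w; try cmpxy x w;
  try cmpxy x y; try cmpxy y w; try cmpxy x w.

Section Loc.
Variables (K : fieldType) (q : K) (m : nat) (k l : 'I_m -> nat) (n : nat).
Hypotheses (hq : q != 0) (h2 : 2%:R != 0 :> K).
Local Notation vb := (Defs.vbasis k l).
Local Notation word := (word k l n).
Local Notation sgn := (sgn K).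
Local Notation AT := (AT q (k:=k) (l:=l)).
Local Notation BT := (BT K (k:=k) (l:=l)).
Local Notation AS := (AS q (k:=k) (l:=l)).
Local Notation BS := (BS K (k:=k) (l:=l)).

Ltac fld := field; rewrite ?hq ?h2 //.

Section Y.
Variables (a b : 'I_n).
Hypotheses (ha : (0 < a)%N) (hb : (b : nat) = a.+1).

Ltac expand3 :=
  rewrite !ocomp_loc2 /loc2 ?wswapK ?(wbraid ha hb) /delta !(eq_word3 a b);
  do 3 rewrite ?(pb hb) ?(sa_p, sa_a, sa_b ha hb, sb_p ha hb, sb_a hb, sb_b hb);
  rewrite ?(agree3_a, agree3_b hb).

Ltac absatoms := repeat match goal with |- context [ (nat_of_bool ?B)%:R ] => generalize ((nat_of_bool B)%:R : K); intro end.

Ltac fin3a i z :=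
  expand3;
  move: (agree3 a b z i) (z (predo a)) (z a) (z b) (i (predo a)) (i a) (i b).
Ltac fin3b x y w :=
  rewrite /AS /BS /AT /BT /dd;
  cases3 x y w;
  case: (vodd x); try case: (vodd y); try case: (vodd w); rewrite /sgn /=;
  absatoms; fld.

Lemma ybeTTT (i z : word) :
  ocomp (ocomp (loc2 AT BT a) (loc2 AT BT b)) (loc2 AT BT a) i z =
  ocomp (ocomp (loc2 AT BT b) (loc2 AT BT a)) (loc2 AT BT b) i z.
Proof. (fin3a i z => r u v t x y w; fin3b x y w). Qed.

Lemma ybeSSS (i z : word) :
  ocomp (ocomp (loc2 AS BS a) (loc2 AS BS b)) (loc2 AS BS a) i z =
  ocomp (ocomp (loc2 AS BS b) (loc2 AS BS a)) (loc2 AS BS b) i z.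
Proof. (fin3a i z => r u v t x y w; fin3b x y w). Qed.

Lemma ybeSST (i z : word) :
  ocomp (ocomp (loc2 AS BS b) (loc2 AS BS a)) (loc2 AT BT b) i z =
  ocomp (ocomp (loc2 AT BT a) (loc2 AS BS b)) (loc2 AS BS a) i z.
Proof. (fin3a i z => r u v t x y w; fin3b x y w). Qed.

Lemma ybeSST2 (i z : word) :
  ocomp (ocomp (loc2 AS BS a) (loc2 AS BS b)) (loc2 AT BT a) i z =
  ocomp (ocomp (loc2 AT BT b) (loc2 AS BS a)) (loc2 AS BS b) i z.
Proof. (fin3a i z => r u v t x y w; fin3b x y w). Qed.

End Y.
End Loc.

Section BraidAlg.
Variables (R : pzRingType).

Fixpoint pd_rec (f : nat -> R) (lo len : nat) : R :=
  if len is len'.+1 then f (lo + len')%N * pd_rec f lo len' else 1.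
Fixpoint pu_rec (f : nat -> R) (lo len : nat) : R :=
  if len is len'.+1 then pu_rec f lo len' * f (lo + len')%N else 1.
Fact pd_key : unit. Proof. by []. Qed.
Definition pd := locked_with pd_key pd_rec.
Fact pu_key : unit. Proof. by []. Qed.
Definition pu := locked_with pu_key pu_rec.

Lemma pdE f lo len : pd f lo len.+1 = f (lo + len)%N * pd f lo len.
Proof. by rewrite /pd unlock. Qed.
Lemma puE f lo len : pu f lo len.+1 = pu f lo len * f (lo + len)%N.
Proof. by rewrite /pu unlock. Qed.
Lemma pd0 f lo : pd f lo 0 = 1. Proof. by rewrite /pd unlock. Qed.
Lemma pu0 f lo : pu f lo 0 = 1. Proof. by rewrite /pu unlock. Qed.

Lemma pdS f lo len : pd f lo len.+1 = pd f lo.+1 len * f lo.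
Proof.
elim: len => [|len IH]; first by rewrite pdE !pd0 addn0 mul1r mulr1.
by rewrite pdE IH mulrA pdE -addSnnS.
Qed.

Lemma puS f lo len : pu f lo len.+1 = f lo * pu f lo.+1 len.
Proof.
elim: len => [|len IH]; first by rewrite puE !pu0 addn0 mul1r mulr1.
by rewrite puE IH -mulrA puE -addSnnS.
Qed.

Lemma comm_pd x f lo len :
  (forall i, (lo <= i < lo + len)%N -> x * f i = f i * x) ->
  x * pd f lo len = pd f lo len * x.
Proof.
elim: len => [|len IH] H; rewrite ?pd0 ?pu0 ?pdE ?puE; first by rewrite mulr1 mul1r.
rewrite mulrA H; last by lia.
by rewrite -mulrA IH ?mulrA // => i hi; apply: H; lia.
Qed.

Lemma comm_pu x f lo len :
  (forall i, (lo <= i < lo + len)%N -> x * f i = f i * x) ->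
  x * pu f lo len = pu f lo len * x.
Proof.
elim: len => [|len IH] H; rewrite ?pd0 ?pu0 ?pdE ?puE; first by rewrite mulr1 mul1r.
rewrite mulrA IH; last by move=> i hi; apply: H; lia.
by rewrite -mulrA H ?mulrA //; lia.
Qed.

Lemma conj_pd A f g lo len :
  (forall i, (lo <= i < lo + len)%N -> A * f i.+1 = g i * A) ->
  A * pd f lo.+1 len = pd g lo len * A.
Proof.
elim: len => [|len IH] H; rewrite ?pd0 ?pu0 ?pdE ?puE; first by rewrite mulr1 mul1r.
rewrite mulrA addSn H; last by lia.
by rewrite -mulrA IH ?mulrA // => i hi; apply: H; lia.
Qed.

Lemma conj_pu A f g lo len :
  (forall i, (lo <= i < lo + len)%N -> A * f i.+1 = g i * A) ->
  A * pu f lo.+1 len = pu g lo len * A.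
Proof.
elim: len => [|len IH] H; rewrite ?pd0 ?pu0 ?pdE ?puE; first by rewrite mulr1 mul1r.
rewrite mulrA IH; last by move=> i hi; apply: H; lia.
by rewrite -mulrA addSn H ?mulrA //; lia.
Qed.

Lemma pu_pd_inv (f g : nat -> R) lo len :
  (forall i, (lo <= i < lo + len)%N -> g i * f i = 1 /\ f i * g i = 1) ->
  pu g lo len * pd f lo len = 1 /\ pd f lo len * pu g lo len = 1.
Proof.
elim: len => [|len IH] H; rewrite ?pd0 ?pu0 ?pdE ?puE; first by rewrite mul1r.
have [h1 h2] : g (lo + len)%N * f (lo + len)%N = 1 /\ f (lo + len)%N * g (lo + len)%N = 1.
  by apply: H; lia.
have [IH1 IH2] : pu g lo len * pd f lo len = 1 /\ pd f lo len * pu g lo len = 1.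
  by apply: IH => i hi; apply: H; lia.
split.
  by rewrite -mulrA [g _ * (_ * _)]mulrA h1 mul1r IH1.
by rewrite -mulrA [pd f lo len * (_ * _)]mulrA IH2 mul1r h2.
Qed.

Variables (N : nat) (T S Ti : nat -> R) (D0 D1 : R).
Hypothesis HTi : forall j, (1 <= j <= N)%N -> Ti j * T j = 1 /\ T j * Ti j = 1.
Hypothesis HfarTT : forall i j, (1 <= i <= N)%N -> (1 <= j <= N)%N ->
  (i.+2 <= j)%N || (j.+2 <= i)%N -> T i * T j = T j * T i.
Hypothesis HfarST : forall i j, (1 <= i <= N)%N -> (1 <= j <= N)%N ->
  (i.+2 <= j)%N || (j.+2 <= i)%N -> S i * T j = T j * S i.
Hypothesis HfarSS : forall i j, (1 <= i <= N)%N -> (1 <= j <= N)%N ->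
  (i.+2 <= j)%N || (j.+2 <= i)%N -> S i * S j = S j * S i.
Hypothesis HbrT : forall j, (1 <= j)%N -> (j.+1 <= N)%N ->
  T j * T j.+1 * T j = T j.+1 * T j * T j.+1.
Hypothesis Hmix1 : forall j, (1 <= j)%N -> (j.+1 <= N)%N ->
  S j.+1 * S j * T j.+1 = T j * S j.+1 * S j.
Hypothesis Hmix2 : forall j, (1 <= j)%N -> (j.+1 <= N)%N ->
  S j * S j.+1 * T j = T j.+1 * S j * S j.+1.
Hypothesis HbrS : forall j, (1 <= j)%N -> (j.+1 <= N)%N ->
  S j * S j.+1 * S j = S j.+1 * S j * S j.+1.
Hypothesis HS1 : (1 <= N)%N -> S 1 * S 1 * T 1 = T 1 * S 1 * S 1.
Hypothesis HD0T : forall j, (2 <= j <= N)%N -> D0 * T j = T j * D0.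
Hypothesis HD0S : forall j, (2 <= j <= N)%N -> D0 * S j = S j * D0.
Hypothesis HD0S1 : (1 <= N)%N -> D0 * S 1 = S 1 * D1.
Hypothesis HD10 : (1 <= N)%N -> D1 * D0 * T 1 = T 1 * (D1 * D0).

Section Shift.
Variable U : nat -> R.
Hypothesis HfarU : forall i j, (1 <= i <= N)%N -> (1 <= j <= N)%N ->
  (i.+2 <= j)%N || (j.+2 <= i)%N -> U i * T j = T j * U i.
Hypothesis HmixU : forall j, (1 <= j)%N -> (j.+1 <= N)%N ->
  U j.+1 * U j * T j.+1 = T j * U j.+1 * U j.

Lemma shiftU len j : (1 <= j)%N -> (j < len)%N -> (len <= N)%N ->
  pd U 1 len * T j.+1 = T j * pd U 1 len.
Proof.
elim: len => [|len IH] hj hjl hlN; first by lia.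
rewrite pdE add1n.
case: (ltngtP j len) => hjlen; last 1 first.
- subst len.
  case: j hj IH hjl hlN => [//|j] _ _ hjl hlN.
  rewrite pdE add1n.
  rewrite -!mulrA -comm_pd; last first.
    by move=> i hi; symmetry; apply: HfarU; lia.
  by rewrite !mulrA HmixU //; lia.
- rewrite -mulrA IH //; last by lia.
  by rewrite !mulrA HfarU //; lia.
- by lia.
Qed.
End Shift.

Definition ThT := pd T 1 N.
Definition theta := pd S 1 N.
Definition J := pu Ti 1 N.
Definition tau := J * theta * D0.

Lemma shiftT j : (1 <= j)%N -> (j < N)%N -> ThT * T j.+1 = T j * ThT.
Proof.
move=> h1 h2; apply: shiftU.
all: first [by move=> i j' ? ? ?; apply: HfarTT | by move=> j' ? ?; symmetry; apply: HbrT | lia | done].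
Qed.

Lemma shiftS j : (1 <= j)%N -> (j < N)%N -> theta * T j.+1 = T j * theta.
Proof. by move=> h1 h2; apply: shiftU => //; move=> i j' ? ? ?; apply: HfarST. Qed.

Lemma JTh : J * ThT = 1 /\ ThT * J = 1.
Proof. by apply: pu_pd_inv => i hi; apply: HTi; lia. Qed.

Lemma shiftJ j : (1 <= j)%N -> (j < N)%N -> J * T j = T j.+1 * J.
Proof.
move=> h1 h2; have [e1 e2] := JTh.
by rewrite -[J * T j]mulr1 -e2 mulrA -[J * T j * ThT]mulrA -shiftT // mulrA e1 mul1r.
Qed.

Lemma tau_comm j : (2 <= j <= N)%N -> tau * T j = T j * tau.
Proof.
case: j => [|j] hj //; rewrite /tau -mulrA HD0T // mulrA -[J * theta * T j.+1]mulrA.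
rewrite shiftS; try lia.
by rewrite mulrA shiftJ; try lia; rewrite !mulrA.
Qed.


Fact Pi_key : unit. Proof. by []. Qed.
Definition Pi := locked_with Pi_key (theta * D0).
Lemma PiE : Pi = theta * D0. Proof. by rewrite /Pi unlock. Qed.

Lemma shiftPi j : (1 <= j)%N -> (j < N)%N -> Pi * T j.+1 = T j * Pi.
Proof.
move=> h1 h2; rewrite PiE -mulrA HD0T; last by lia.
by rewrite mulrA shiftS // mulrA.
Qed.

Lemma conjTi (P : R) j : (1 <= j)%N -> (j < N)%N -> P * T j.+1 = T j * P ->
  P * Ti j.+1 = Ti j * P.
Proof.
move=> h1 h2 hP.
have [e1 e2] : Ti j.+1 * T j.+1 = 1 /\ T j.+1 * Ti j.+1 = 1 by apply: HTi; lia.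
have [e3 e4] : Ti j * T j = 1 /\ T j * Ti j = 1 by apply: HTi; lia.
rewrite -[Ti j * P]mulr1 -e2 !mulrA -[Ti j * P * T j.+1]mulrA hP.
by rewrite mulrA e3 mul1r.
Qed.

Lemma shiftPiTi j : (1 <= j)%N -> (j < N)%N -> Pi * Ti j.+1 = Ti j * Pi.
Proof. by move=> h1 h2; apply: conjTi => //; apply: shiftPi. Qed.

Lemma conj_inv (X Y A B : R) : X * Y = 1 -> Y * X = 1 -> X * B = A * X -> Y * A = B * Y.
Proof.
move=> h1 h2 h3.
by rewrite -[Y * A]mulr1 -h1 mulrA -[Y * A * X]mulrA -h3 mulrA h2 mul1r.
Qed.

Lemma rho_sq k : (1 <= k <= N)%N ->
  pd S 1 k * pd S 1 k * T 1 = T k * (pd S 1 k * pd S 1 k).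
Proof.
case: k => [//|k]; elim: k => [|k IH] hk.
  by rewrite pdE pd0 mulr1 HS1 ?mulrA //; lia.
have IH' := IH ltac:(lia).
have E1 : pd S 1 k.+2 = S k.+2 * pd S 1 k.+1 by rewrite pdE add1n.
have E2 : pd S 1 k.+1 = S k.+1 * pd S 1 k by rewrite pdE add1n.
have C : S k.+2 * pd S 1 k = pd S 1 k * S k.+2.
  apply: comm_pd => i hi; apply: HfarSS; lia.
have E3 : pd S 1 k.+2 * pd S 1 k.+2 = S k.+1 * S k.+2 * (pd S 1 k.+1 * pd S 1 k.+1).
  rewrite E1 {1}E2 -!mulrA [pd S 1 k * (S k.+2 * _)]mulrA -C.
  rewrite !mulrA -HbrS; try lia.
  by rewrite -!mulrA E2 !mulrA.
rewrite E3 -mulrA IH' mulrA Hmix2; try lia.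
by rewrite !mulrA.
Qed.

Lemma tau_br : (1 <= N)%N -> tau * T 1 * tau * T 1 = T 1 * tau * T 1 * tau.
Proof.
move=> hN; set N' := N.-1; have eN : N = N'.+1 by rewrite /N'; lia.
set J' := pu Ti 2 N'; set J'' := pu Ti 1 N'.
set Th' := pd T 2 N'; set Th'' := pd T 1 N'; set mu := pd S 2 N'.
have [i1 i2] : Ti 1 * T 1 = 1 /\ T 1 * Ti 1 = 1 by apply: HTi; lia.
have EJ : J = Ti 1 * J' by rewrite /J eN puS.
have Eth : theta = mu * S 1 by rewrite /theta eN pdS.
have ETh : ThT = Th' * T 1 by rewrite /ThT eN pdS.
have ETh2 : ThT = T N * Th'' by rewrite /ThT eN pdE add1n.
have Etau : tau = Ti 1 * J' * Pi by rewrite /tau EJ PiE !mulrA.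
have PJ : Pi * J' = J'' * Pi.
  apply: conj_pu => i hi; apply: shiftPiTi; lia.
have D0th : D0 * theta = theta * D1.
  rewrite Eth mulrA comm_pd; last by move=> i hi; apply: HD0S; lia.
  by rewrite -mulrA HD0S1 // mulrA.
have Pi2 : Pi * Pi = theta * theta * (D1 * D0).
  by rewrite PiE -mulrA [D0 * (_ * _)]mulrA D0th !mulrA.
have ThTh : ThT * Th' = Th'' * ThT.
  apply: conj_pd => i hi; apply: shiftT; lia.
have XT : Th'' * Th' * T 1 = T N * (Th'' * Th').
  by rewrite -mulrA -ETh mulrA -ThTh ETh2.
have [j1 j2] : J' * Th' = 1 /\ Th' * J' = 1.
  by apply: pu_pd_inv => i hi; apply: HTi; lia.
have [j3 j4] : J'' * Th'' = 1 /\ Th'' * J'' = 1.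
  by apply: pu_pd_inv => i hi; apply: HTi; lia.
have XY : Th'' * Th' * (J' * J'') = 1.
  by rewrite -mulrA [Th' * (_ * _)]mulrA j2 mul1r j4.
have YX : J' * J'' * (Th'' * Th') = 1.
  by rewrite -mulrA [J'' * (_ * _)]mulrA j3 mul1r j1.
have YT : J' * J'' * T N = T 1 * (J' * J'') by apply: conj_inv XY YX XT.
have M : J' * Pi * J' * Pi * T 1 = T 1 * (J' * Pi * J' * Pi).
  have -> : J' * Pi * J' * Pi = J' * J'' * (Pi * Pi).
    by rewrite -[J' * Pi * J']mulrA PJ !mulrA.
  have R2 := rho_sq (k:=N) ltac:(lia).
  rewrite -/theta in R2.
  have HD' : D1 * (D0 * T 1) = T 1 * (D1 * D0) by rewrite mulrA HD10.
  have R2' Z : theta * (theta * (T 1 * Z)) = T N * (theta * (theta * Z)).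
    by rewrite !mulrA R2 !mulrA.
  have YT' Z : J' * (J'' * (T N * Z)) = T 1 * (J' * (J'' * Z)).
    by rewrite !mulrA YT !mulrA.
  rewrite Pi2 -!mulrA HD' R2' YT'.
  done.
rewrite Etau.
have L1 : Ti 1 * J' * Pi * T 1 * (Ti 1 * J' * Pi) * T 1 = Ti 1 * (J' * Pi * J' * Pi * T 1).
  by rewrite -[_ * T 1 * (Ti 1 * J' * Pi)]mulrA !mulrA -[_ * T 1 * Ti 1]mulrA i2 mulr1.
have L2 : T 1 * (Ti 1 * J' * Pi) * T 1 * (Ti 1 * J' * Pi) = J' * Pi * J' * Pi.
  by rewrite !mulrA i2 mul1r -[J' * Pi * T 1 * Ti 1]mulrA i2 mulr1.
rewrite L1 L2 M mulrA i1 mul1r.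
done.
Qed.

End BraidAlg.


Section Loc2.
Variables (K : fieldType) (q : K) (m : nat) (k l : 'I_m -> nat) (n : nat).
Hypotheses (hq : q != 0) (h2 : 2%:R != 0 :> K).
Local Notation vb := (Defs.vbasis k l).
Local Notation word := (word k l n).
Local Notation sgn := (sgn K).
Local Notation AT := (AT q (k:=k) (l:=l)).
Local Notation BT := (BT K (k:=k) (l:=l)).
Local Notation AS := (AS q (k:=k) (l:=l)).
Local Notation BS := (BS K (k:=k) (l:=l)).
Definition ATi (x y : vb) : K := AT x y - (q - q^-1).

Ltac fld2 := field; rewrite ?hq ?h2 //.
Ltac absatoms2 := repeat match goal with |- context [ (nat_of_bool ?B)%:R ] => generalize ((nat_of_bool B)%:R : K); intro end.

Ltac fin2a a i z :=
  rewrite !ocomp_loc2 /loc2 ?wswapK /delta !(eq_word2 a) ?wswap_p ?wswap_a ?wswapK ?agree2_a;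
  move: (agree2 a z i) (z (predo a)) (z a) (i (predo a)) (i a).
Ltac fin2b x y :=
  rewrite /ATi /AS /BS /AT /BT /dd; cmpxy x y; try cmpxy x y;
  case: (vodd x); try case: (vodd y); rewrite /sgn /=; absatoms2; fld2.

Lemma S1S1T1 (a : 'I_n) (i z : word) :
  ocomp (ocomp (loc2 AS BS a) (loc2 AS BS a)) (loc2 AT BT a) i z =
  ocomp (ocomp (loc2 AT BT a) (loc2 AS BS a)) (loc2 AS BS a) i z.
Proof. fin2a a i z => r u v x y; fin2b x y. Qed.

Lemma TiS_eq (a : 'I_n) (i z : word) :
  ocomp (loc2 ATi BT a) (loc2 AS BS a) i z - delta K i z =
  (if vlt (i (predo a)) (i a) && ~~ (vcol (i (predo a)) == vcol (i a))
   then - sgn (vodd (i (predo a)) && vodd (i a)) * (q - q^-1) else 0) * delta K (wswap a i) z.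
Proof. fin2a a i z => r u v x y; fin2b x y. Qed.

Lemma TiT (a : 'I_n) (i z : word) :
  ocomp (loc2 ATi BT a) (loc2 AT BT a) i z = delta K i z.
Proof. fin2a a i z => r u v x y; fin2b x y. Qed.

Lemma TTi (a : 'I_n) (i z : word) :
  ocomp (loc2 AT BT a) (loc2 ATi BT a) i z = delta K i z.
Proof. fin2a a i z => r u v x y; fin2b x y. Qed.

Lemma T_quad (a : 'I_n) (i z : word) :
  ocomp (loc2 AT BT a) (loc2 AT BT a) i z = (q - q^-1) * loc2 AT BT a i z + delta K i z.
Proof.
rewrite [in RHS]/loc2; fin2a a i z => r u v x y.
rewrite ?wswap_p ?wswap_a; fin2b x y.
Qed.

End Loc2.

Section Far.
Variables (K : fieldType) (m : nat) (k l : 'I_m -> nat) (n : nat).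
Local Notation vb := (Defs.vbasis k l).
Local Notation word := (word k l n).

Lemma ord_neq (x y : 'I_n) : (x : nat) <> y -> x != y.
Proof. by move=> h; apply/eqP => e; apply: h; rewrite e. Qed.

Lemma loc2_far (A B A' B' : vb -> vb -> K) (a b : 'I_n) (i z : word) :
  (0 < a)%N -> (0 < b)%N -> (a.+2 <= b)%N || (b.+2 <= a)%N ->
  ocomp (loc2 A B a) (loc2 A' B' b) i z = ocomp (loc2 A' B' b) (loc2 A B a) i z.
Proof.
move=> ha hb hab.
have h1 : predo a != predo b by apply: ord_neq; rewrite /=; lia.
have h2 : predo a != b by apply: ord_neq; rewrite /=; lia.
have h3 : a != predo b by apply: ord_neq; rewrite /=; lia.
have h4 : a != b by apply: ord_neq; rewrite /=; lia.
have h2' : b != predo a by rewrite eq_sym.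
have h3' : predo b != a by rewrite eq_sym.
have h1' : predo b != predo a by rewrite eq_sym.
have h4' : b != a by rewrite eq_sym.
rewrite !ocomp_loc2 /loc2.
rewrite !(wswap_o _ h1 h2) !(wswap_o _ h3 h4) !(wswap_o _ h1' h3') !(wswap_o _ h2' h4').
rewrite (@wswapC _ _ _ _ a b) ?h1 ?h2 ?h3 ?h4 //.
ring.
Qed.

Lemma loc2_diag (f0 f1 : word -> K) (A B : vb -> vb -> K) (a : 'I_n) :
  (forall i : word, A (i (predo a)) (i a) != 0 -> f0 i = f1 i) ->
  (forall i : word, f0 (wswap a i) = f1 i) ->
  forall i z, ocomp (diag f0) (loc2 A B a) i z = ocomp (loc2 A B a) (diag f1) i z.
Proof.
move=> HA Hs i z; rewrite ocomp_diagL ocomp_diagR /loc2 /delta mulrDl mulrDr.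
congr (_ + _).
  have [->|hz] := eqVneq z i; last by rewrite /= !(mulr0, mul0r).
  have [hA|hA] := eqVneq (A (i (predo a)) (i a)) 0; first by rewrite hA !(mulr0, mul0r).
  by rewrite HA // mulrC.
have [->|hz] := eqVneq z (wswap a i); last by rewrite /= !(mulr0, mul0r).
by rewrite Hs mulrC.
Qed.

Definition Mw (M : 'M[K]_(wdim k l n)) (i z : word) : K := M (enum_rank z) (enum_rank i).

Lemma Mw_opmx (img : word -> word -> K) i z : Mw (opmx img) i z = img i z.
Proof. by rewrite /Mw mxE !enum_rankK. Qed.

Lemma Mw_mul M N i z : Mw (M *m N) i z = \sum_w Mw N i w * Mw M w z.
Proof.
rewrite /Mw mxE (reindex (@enum_rank word)) /=; last first.
  by apply: onW_bij; apply: enum_rank_bij.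
by apply: eq_bigr => w _; rewrite mulrC.
Qed.

Lemma Mw_add M N i z : Mw (M + N) i z = Mw M i z + Mw N i z.
Proof. by rewrite /Mw mxE. Qed.
Lemma Mw_opp M i z : Mw (- M) i z = - Mw M i z.
Proof. by rewrite /Mw mxE. Qed.
Lemma Mw_1 i z : Mw 1%:M i z = delta K i z.
Proof. by rewrite /Mw mxE /delta (inj_eq enum_rank_inj). Qed.
Lemma Mw_scal c i z : Mw c%:M i z = c * delta K i z.
Proof. by rewrite /Mw mxE /delta (inj_eq enum_rank_inj) mulr_natr. Qed.

Lemma sum_nz (F : word -> K) : \sum_w F w != 0 -> exists w, F w != 0.
Proof.
move=> H; apply/existsP; apply: contraNT H => /existsPn H.
by rewrite big1 // => w _; move: (H w); rewrite negbK => /eqP.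
Qed.

Lemma mulf_nz2 (x y : K) : x * y != 0 -> x != 0 /\ y != 0.
Proof. by rewrite mulf_eq0 negb_or => /andP. Qed.

Lemma loc2_nz (A B : vb -> vb -> K) (a : 'I_n) i z : loc2 A B a i z != 0 ->
  (z = i /\ A (i (predo a)) (i a) != 0) \/ (z = wswap a i /\ B (i (predo a)) (i a) != 0).
Proof.
rewrite /loc2 /delta.
have [->|h1] := eqVneq z i.
  have [hA|hA] := eqVneq (A (i (predo a)) (i a)) 0; last by left.
  rewrite hA mul0r add0r => /mulf_nz2 [hb /eqP e].
  by right; split => //; case: eqP e.
have [->|h2] := eqVneq z (wswap a i); first by rewrite mulr0 add0r => /mulf_nz2 [? ?]; right.
by rewrite !mulr0 addr0 eqxx.
Qed.
End Far.

Section Main.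
Variables (K : fieldType) (q : K) (m : nat) (Q : 'I_m -> K) (k l : 'I_m -> nat) (n' : nat).
Hypotheses (hq : q != 0) (h2 : 2%:R != 0 :> K).
Local Notation n := n'.+1.
Local Notation vb := (Defs.vbasis k l).
Local Notation word := (word k l n).
Local Notation R := ('M[K]_(wdim k l n)).
Local Notation AT := (AT q (k:=k) (l:=l)).
Local Notation BT := (BT K (k:=k) (l:=l)).
Local Notation AS := (AS q (k:=k) (l:=l)).
Local Notation BS := (BS K (k:=k) (l:=l)).
Local Notation ATi := (ATi q (k:=k) (l:=l)).

Definition Tn (j : nat) : R := T_op q k l (inord j : 'I_n).
Definition Sn (j : nat) : R := S_op q k l (inord j : 'I_n).
Definition Tin (j : nat) : R := invmx (Tn j).
Definition p0 : 'I_n := ord0.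
Definition D0 : R := S0_op Q k l p0.
Definition f0 (i : word) : K := Q (vcol (i p0)).
Definition f1 (i : word) : K := Q (vcol (i (inord 1))).
Definition D1 : R := opmx (diag f1).

Lemma opmxMr (f g : word -> word -> K) : opmx f * opmx g = opmx (ocomp f g) :> R.
Proof. exact: opmxM. Qed.
Lemma oneE : (1 : R) = 1%:M. Proof. by []. Qed.

Lemma D0E : D0 = opmx (diag f0). Proof. by []. Qed.

Lemma TnE j : Tn j = opmx (loc2 AT BT (inord j)). Proof. exact: T_opE. Qed.
Lemma SnE j : Sn j = opmx (loc2 AS BS (inord j)). Proof. exact: S_opE. Qed.

Lemma inv_uniq (A B : R) : A *m B = 1%:M -> invmx A = B.
Proof.
move=> h; have [uA _] := mulmx1_unit h.
by rewrite -[invmx A]mulmx1 -h mulmxA mulVmx // mul1mx.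
Qed.

Lemma TinE j : Tin j = opmx (loc2 ATi BT (inord j)).
Proof.
apply: inv_uniq; rewrite TnE opmxM scalar_opmx; apply: opmx_ext => i z.
by rewrite mul1r; apply: TTi.
Qed.

Lemma inordV (j : nat) : (j <= n')%N -> ((inord j : 'I_n) : nat) = j.
Proof. by move=> h; rewrite inordK. Qed.

Lemma HTi j : (1 <= j <= n')%N -> Tin j * Tn j = 1 /\ Tn j * Tin j = 1.
Proof.
move=> hj; rewrite TinE TnE; split; rewrite oneE opmxMr scalar_opmx; apply: opmx_ext => i z.
  by rewrite mul1r; apply: TiT.
by rewrite mul1r; apply: TTi.
Qed.

Lemma far_gen (A B A' B' : vb -> vb -> K) i j : (1 <= i <= n')%N -> (1 <= j <= n')%N ->
  (i.+2 <= j)%N || (j.+2 <= i)%N ->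
  opmx (loc2 A B (inord i)) * opmx (loc2 A' B' (inord j)) =
  opmx (loc2 A' B' (inord j)) * opmx (loc2 A B (inord i)) :> R.
Proof.
move=> hi hj hij; rewrite !opmxMr; apply: opmx_ext => w z.
apply: loc2_far; rewrite ?inordV //; lia.
Qed.

Lemma HfarTT i j : (1 <= i <= n')%N -> (1 <= j <= n')%N ->
  (i.+2 <= j)%N || (j.+2 <= i)%N -> Tn i * Tn j = Tn j * Tn i.
Proof. by move=> *; rewrite !TnE far_gen. Qed.
Lemma HfarST i j : (1 <= i <= n')%N -> (1 <= j <= n')%N ->
  (i.+2 <= j)%N || (j.+2 <= i)%N -> Sn i * Tn j = Tn j * Sn i.
Proof. by move=> *; rewrite TnE SnE far_gen. Qed.
Lemma HfarSS i j : (1 <= i <= n')%N -> (1 <= j <= n')%N ->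
  (i.+2 <= j)%N || (j.+2 <= i)%N -> Sn i * Sn j = Sn j * Sn i.
Proof. by move=> *; rewrite !SnE far_gen. Qed.

Section Y3.
Variable j : nat.
Hypotheses (hj : (1 <= j)%N) (hj' : (j.+1 <= n')%N).
Let a : 'I_n := inord j.
Let b : 'I_n := inord j.+1.
Let ha : (0 < a)%N. Proof. by rewrite /a inordV //; lia. Qed.
Let hb : (b : nat) = a.+1. Proof. by rewrite /a /b !inordV //; lia. Qed.

Lemma HbrT : Tn j * Tn j.+1 * Tn j = Tn j.+1 * Tn j * Tn j.+1.
Proof.
rewrite !TnE -/a -/b !opmxMr; apply: opmx_ext => i z.
by apply: ybeTTT.
Qed.
Lemma Hmix1 : Sn j.+1 * Sn j * Tn j.+1 = Tn j * Sn j.+1 * Sn j.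
Proof.
rewrite !TnE !SnE -/a -/b !opmxMr; apply: opmx_ext => i z.
by apply: ybeSST.
Qed.
Lemma Hmix2 : Sn j * Sn j.+1 * Tn j = Tn j.+1 * Sn j * Sn j.+1.
Proof.
rewrite !TnE !SnE -/a -/b !opmxMr; apply: opmx_ext => i z.
by apply: ybeSST2.
Qed.
Lemma HbrS : Sn j * Sn j.+1 * Sn j = Sn j.+1 * Sn j * Sn j.+1.
Proof.
rewrite !SnE -/a -/b !opmxMr; apply: opmx_ext => i z.
by apply: ybeSSS.
Qed.
End Y3.


Lemma AS_nz (x y : vb) : AS x y != 0 -> vcol x = vcol y.
Proof.
rewrite /AS; case: (vcol x =P vcol y) => // _.
by case: (x =P y) => [->|] //; rewrite eqxx.
Qed.

Lemma ATi_nz (x y : vb) : ATi x y != 0 -> ~~ vlt x y.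
Proof. by rewrite /ATi /AT; case: (vlt x y) => //; rewrite subrr eqxx. Qed.

Lemma predo1 : (1 <= n')%N -> predo (inord 1 : 'I_n) = p0.
Proof. by move=> h; apply: val_inj; rewrite /= inordK. Qed.

Lemma HS1 : (1 <= n')%N -> Sn 1 * Sn 1 * Tn 1 = Tn 1 * Sn 1 * Sn 1.
Proof.
move=> h; rewrite !TnE !SnE !opmxMr; apply: opmx_ext => i z.
by apply: S1S1T1.
Qed.

Lemma f0_swap j (i : word) : (2 <= j <= n')%N -> f0 (wswap (inord j) i) = f0 i.
Proof.
move=> hj; rewrite /f0 wswap_o //.
  by apply: ord_neq; rewrite /= inordK; lia.
by apply: ord_neq; rewrite /= inordK; lia.
Qed.

Lemma HD0T j : (2 <= j <= n')%N -> D0 * Tn j = Tn j * D0.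
Proof.
move=> hj; rewrite D0E TnE !opmxMr; apply: opmx_ext => i z.
by apply: loc2_diag => // w; apply: f0_swap.
Qed.

Lemma HD0S j : (2 <= j <= n')%N -> D0 * Sn j = Sn j * D0.
Proof.
move=> hj; rewrite D0E SnE !opmxMr; apply: opmx_ext => i z.
by apply: loc2_diag => // w; apply: f0_swap.
Qed.

Lemma HD0S1 : (1 <= n')%N -> D0 * Sn 1 = Sn 1 * D1.
Proof.
move=> h; rewrite D0E SnE /D1 !opmxMr; apply: opmx_ext => i z.
apply: loc2_diag => w.
  by rewrite predo1 // /f0 /f1 => /AS_nz ->.
by rewrite /f0 /f1 -predo1 // wswap_p.
Qed.

Lemma D10E : D1 * D0 = opmx (diag (fun i => f0 i * f1 i)).
Proof.
rewrite D0E /D1 opmxMr; apply: opmx_ext => i z.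
rewrite ocomp_diagL /diag /delta.
by have [->|hz] := eqVneq z i; rewrite /= ?mulr1 ?mulr0 ?mul0r // mulrC.
Qed.

Lemma HD10 : (1 <= n')%N -> D1 * D0 * Tn 1 = Tn 1 * (D1 * D0).
Proof.
move=> h; rewrite D10E TnE !opmxMr; apply: opmx_ext => i z.
apply: loc2_diag => // w.
by rewrite /f0 /f1 -predo1 // wswap_p wswap_a mulrC.
Qed.

Lemma ocomp_scalL (c : K) (f : word -> word -> K) i z :
  ocomp (fun i z => c * delta K i z) f i z = c * f i z.
Proof.
rewrite /ocomp; under eq_bigr do rewrite mulrCA.
by rewrite -mulr_sumr sum_delta2.
Qed.

Lemma HquadT j : (1 <= j <= n')%N -> Tn j * Tn j = (q - q^-1)%:M * Tn j + 1.
Proof.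
move=> hj; rewrite TnE oneE [(q - q^-1)%:M]scalar_opmx [1%:M]scalar_opmx !opmxMr opmxD.
apply: opmx_ext => i z; rewrite ocomp_scalL mul1r.
by apply: T_quad => //; rewrite inordV //; lia.
Qed.

Definition Zm : R := pu Tin 1 n' * pd Sn 1 n'.
Definition tauM : R := tau n' Sn Tin D0.

Lemma tauM_comm j : (2 <= j <= n')%N -> tauM * Tn j = Tn j * tauM.
Proof.
move=> hj; apply: (@tau_comm _ n' Tn Sn Tin D0 D1) => //.
all: first [ exact: HTi | exact: HfarTT | exact: HfarST | exact: HfarSS | exact: HbrT
           | exact: Hmix1 | exact: Hmix2 | exact: HbrS | exact: HS1 | exact: HD0T
           | exact: HD0S | exact: HD0S1 | exact: HD10 ].
Qed.

Lemma tauM_br : (1 <= n')%N -> tauM * Tn 1 * tauM * Tn 1 = Tn 1 * tauM * Tn 1 * tauM.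
Proof.
move=> h; apply: (@tau_br _ n' Tn Sn Tin D0 D1) => //.
all: first [ exact: HTi | exact: HfarTT | exact: HfarST | exact: HfarSS | exact: HbrT
           | exact: Hmix1 | exact: Hmix2 | exact: HbrS | exact: HS1 | exact: HD0T
           | exact: HD0S | exact: HD0S1 | exact: HD10 ].
Qed.


Lemma Mw_mulr (M N : R) i z : Mw (M * N) i z = \sum_w Mw N i w * Mw M w z.
Proof. exact: Mw_mul. Qed.
Lemma Mw_subr1 (M : R) i z : Mw (M - 1) i z = Mw M i z - delta K i z.
Proof. by rewrite Mw_add Mw_opp oneE Mw_1. Qed.
Lemma Mw0 i z : Mw (0 : R) i z = 0.
Proof. by rewrite /Mw mxE. Qed.

Lemma nvlt_cn (x y : vb) : ~~ vlt x y -> (cn y <= cn x)%N.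
Proof. by rewrite vltE negb_or => /andP [h _]; rewrite leqNgt. Qed.
Lemma vlt_col_cn (x y : vb) : vlt x y && ~~ (vcol x == vcol y) -> (cn x < cn y)%N.
Proof.
rewrite vltE vcol_eqE => /andP [/orP [//|/andP [/eqP e _]]].
by rewrite e eqxx.
Qed.
Lemma vcol_cn (x y : vb) : vcol x = vcol y -> cn x = cn y.
Proof. by rewrite /cn /vcol => ->. Qed.

Lemma nzaddr (x y : K) : x + y != 0 -> x != 0 \/ y != 0.
Proof. by case: (eqVneq x 0) => [->|h]; [rewrite add0r; right | left]. Qed.

Definition Rel (lo : nat) (i z : word) : Prop :=
  (forall t : 'I_n, (t < lo.-1)%N -> z t = i t) /\
  (cn (i (inord lo.-1)) < cn (z (inord lo.-1)))%N.

Lemma Zsupp len : forall lo, (1 <= lo)%N -> (lo + len = n)%N -> forall i z,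
  Mw (pu Tin lo len * pd Sn lo len - 1) i z != 0 -> Rel lo i z.
Proof.
elim: len => [|len IH] lo hlo hlen i z.
  by rewrite pu0 pd0 mulr1 subrr Mw0 eqxx.
set a : 'I_n := inord lo.
have ha : (a : nat) = lo by rewrite /a inordV //; lia.
have hpa : ((predo a : 'I_n) : nat) = lo.-1 by rewrite /= ha.
have ep : (inord lo.-1 : 'I_n) = predo a.
  by apply: val_inj => /=; rewrite ha inordV //; lia.
have E : pu Tin lo len.+1 * pd Sn lo len.+1 - 1 =
   (Tin lo * Sn lo - 1) + Tin lo * (pu Tin lo.+1 len * pd Sn lo.+1 len - 1) * Sn lo.
  rewrite puS pdS mulrBr mulr1 mulrBl !mulrA.
  by rewrite [RHS]addrC [RHS]addrA subrK.
rewrite E Mw_add => /nzaddr [hA|hB].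
- move: hA; rewrite Mw_subr1 TinE SnE opmxMr Mw_opmx -/a TiS_eq //.
  case/mulf_nz2 => hc hd.
  have hc' : vlt (i (predo a)) (i a) && ~~ (vcol (i (predo a)) == vcol (i a)).
    by move: hc; case: ifP => //; rewrite eqxx.
  have ez : z = wswap a i by apply/eqP; move: hd; rewrite /delta; case: (z == wswap a i) => //; rewrite eqxx.
  subst z; split.
    move=> t ht; rewrite wswap_o //; apply: ord_neq; lia.
  by rewrite ep wswap_p; apply: vlt_col_cn.
- move: hB; rewrite Mw_mulr => /sum_nz [w /mulf_nz2 [hS hR]].
  move: hR; rewrite Mw_mulr => /sum_nz [v /mulf_nz2 [hE hT]].
  have [Rv1 Rv2] := IH lo.+1 ltac:(lia) ltac:(lia) w v hE.
  rewrite /= -/a in Rv2.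
  move: hS; rewrite SnE Mw_opmx -/a => /loc2_nz hS.
  move: hT; rewrite TinE Mw_opmx -/a => /loc2_nz hT.
  have vw_p : v (predo a) = w (predo a) by apply: Rv1; lia.
  split.
    move=> t ht.
    have ht1 : t != predo a by apply: ord_neq; lia.
    have ht2 : t != a by apply: ord_neq; lia.
    have zv : z t = v t by case: hT => [[-> _]|[-> _]] //; rewrite wswap_o.
    have wi : w t = i t by case: hS => [[-> _]|[-> _]] //; rewrite wswap_o.
    by rewrite zv Rv1 ?wi //; lia.
  rewrite ep.
  case: hT => [[ez /ATi_nz hv]|[ez _]]; subst z.
    have := nvlt_cn hv; rewrite vw_p.
    case: hS => [[ew /AS_nz /vcol_cn hc]|[ew _]]; subst w.
      by move: Rv2; rewrite hc; lia.
    by move: Rv2; rewrite wswap_p wswap_a; lia.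
  rewrite wswap_p.
  case: hS => [[ew /AS_nz /vcol_cn hc]|[ew _]]; subst w.
    by move: Rv2; rewrite hc.
  by move: Rv2; rewrite wswap_a.
Qed.


Lemma enumE : enum 'I_n = map (fun j => inord j) (iota 0 n).
Proof.
rewrite -val_enum_ord -map_comp -[LHS]map_id; apply: eq_map => i /=.
by rewrite inord_val.
Qed.

Lemma big_iota_pu (G : nat -> R) len : \prod_(j <- iota 1 len) G j = pu G 1 len.
Proof.
elim: len => [|len IH]; first by rewrite big_nil pu0.
by rewrite -[len.+1]addn1 iotaD big_cat /= big_seq1 IH addn1 puE.
Qed.

Lemma big_iota_pd (G : nat -> R) len : \prod_(j <- rev (iota 1 len)) G j = pd G 1 len.
Proof.
elim: len => [|len IH]; first by rewrite big_nil pd0.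
by rewrite -[len.+1]addn1 iotaD rev_cat /= big_cons IH addn1 pdE.
Qed.

Lemma bigJ : \big[mulmx/1%:M]_(a <- enum 'I_n | (0 < val a)%N) invmx (T_op q k l a) = pu Tin 1 n'.
Proof.
change (\prod_(a <- enum 'I_n | (0 < val a)%N) invmx (T_op q k l a) = pu Tin 1 n').
rewrite enumE big_map /= big_cons /= inordV // ltnn.
rewrite -big_iota_pu big_seq_cond [RHS]big_seq_cond; apply: eq_big => [j|//].
rewrite mem_iota andbT; apply/andP/idP => [[]//|h]; split => //.
by move: h => /andP [g1 g2]; rewrite inordV; lia.
Qed.

Lemma bigTh : theta_op q k l n = pd Sn 1 n'.
Proof.
change (\prod_(a <- rev (enum 'I_n) | (0 < val a)%N) S_op q k l a = pd Sn 1 n').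
rewrite enumE -map_rev big_map /= rev_cons big_rcons /= inordV // ltnn mulr1.
rewrite -big_iota_pd big_seq_cond [RHS]big_seq_cond; apply: eq_big => [j|//].
rewrite mem_rev mem_iota andbT; apply/andP/idP => [[]//|h]; split => //.
by move: h => /andP [g1 g2]; rewrite inordV; lia.
Qed.

Lemma T0E : T0_op q Q k l p0 = tauM.
Proof. by rewrite /T0_op bigJ bigTh. Qed.

Lemma tauME : tauM = Zm * D0. Proof. by []. Qed.

Lemma Mw_tau w z : Mw tauM w z = f0 w * Mw Zm w z.
Proof.
rewrite tauME Mw_mulr D0E; under eq_bigr do rewrite Mw_opmx /diag -mulrA.
by rewrite /delta -mulr_sumr sum_delta.
Qed.

Lemma cyclo (hm : (0 < m)%N) : \prod_(c < m) (tauM - (Q c)%:M) = 0.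
Proof.
pose c0 : 'I_m := Ordinal hm.
pose G (j : nat) : R := tauM - (Q (insubd c0 j))%:M.
have -> : \prod_(c < m) (tauM - (Q c)%:M) = \prod_(0 <= j < m) G j.
  by rewrite big_mkord; apply: eq_bigr => c _; rewrite /G valKd.
have key kk : (kk <= m)%N -> forall i z, Mw (\prod_(0 <= j < kk) G j) i z != 0 ->
    (kk <= cn (z p0))%N.
  elim: kk => [//|kk IH] hk i z.
  rewrite big_nat_recr //=.
  have -> : \prod_(0 <= j < kk) G j * G kk = G kk * \prod_(0 <= j < kk) G j.
    symmetry; apply: commr_prod => j _.
    have cs (c : K) (M : R) : GRing.comm M c%:M by rewrite /GRing.comm; exact: scalar_mxC.
    rewrite /G; apply: commrB; last exact: cs.
    by apply: commr_sym; apply: commrB; [exact: commr_refl | exact: cs].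
  rewrite Mw_mulr => /sum_nz [w /mulf_nz2 [hP hG]].
  have hw := IH ltac:(lia) i w hP.
  move: hG; rewrite /G Mw_add Mw_opp Mw_scal Mw_tau.
  have -> : f0 w * Mw Zm w z - Q (insubd c0 kk) * delta K w z =
     f0 w * Mw (Zm - 1) w z + (f0 w - Q (insubd c0 kk)) * delta K w z.
    by rewrite Mw_subr1; ring.
  case/nzaddr => [/mulf_nz2 [_ hZ]|/mulf_nz2 [hf hd]].
    have [_ hr] := Zsupp (len:=n') (lo:=1) (erefl _) (erefl _) hZ.
    have e0 : (inord 0 : 'I_n) = p0 by apply: val_inj; rewrite /= inordK.
    by move: hr; rewrite /= e0; lia.
  have ez : z = w by apply/eqP; move: hd; rewrite /delta; case: (z == w) => //; rewrite eqxx.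
  subst z.
  have hne : cn (w p0) != kk.
    apply: contra hf => /eqP e; rewrite /f0.
    suff -> : vcol (w p0) = insubd c0 kk by rewrite subrr.
    by apply: val_inj; rewrite insubdK //= -e /cn.
  by move: hne hw; lia.
apply/matrixP => r s; rewrite mxE.
have := key m (leqnn m) (enum_val s) (enum_val r).
rewrite /Mw !enum_valK.
case: eqP => // _ /(_ isT); rewrite /cn; move: (vcol (enum_val r p0)) => c.
by rewrite /vcol leqNgt ltn_ord.
Qed.

End Main.

Section Hecke.
Variables (K : fieldType) (q : K) (m : nat) (Q : 'I_m -> K) (k l : 'I_m -> nat) (n' : nat).
Hypotheses (hq : q != 0) (h2 : 2%:R != 0 :> K).
Local Notation n := n'.+1.

Lemma hecke (hm : (0 < m)%N) :
  HeckeRelR q Q (@scalar_mx K (wdim k l n)) (Tgen q Q k l (n:=n)).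
Proof.
have TgenP (a : 'I_n) : (0 < a)%N -> Tgen q Q k l a = Tn q k l n' a.
  move=> ha; rewrite /Tgen /Tn inord_val.
  by case: eqP => // e; move: ha; rewrite e.
have Tgen0 (a : 'I_n) : (a : nat) = 0%N -> Tgen q Q k l a = tauM q Q k l n'.
  move=> ha; have -> : a = p0 n' by apply: val_inj.
  by rewrite /Tgen /= T0E.
split.
- by move=> a0 h0; rewrite Tgen0 //; apply: cyclo.
- move=> a0 a1 h0 h1; rewrite Tgen0 // TgenP ?h1 //.
  apply: tauM_br => //; have := ltn_ord a1; move: h1 => /= h1; lia.
- move=> a ha; rewrite TgenP //; apply: HquadT => //.
  by have := ltn_ord a; move: ha => /= ha; lia.
- move=> a b hab; move: hab => /= hab.
  have ha := ltn_ord a; have hb := ltn_ord b.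
  case: (posnP (a : nat)) => [a0|a0].
    rewrite (Tgen0 a) // (TgenP b); last by lia.
    by apply: tauM_comm => //; lia.
  case: (posnP (b : nat)) => [b0|b0].
    rewrite (Tgen0 b) // (TgenP a) //.
    by symmetry; apply: tauM_comm => //; lia.
  rewrite !TgenP //; apply: HfarTT; lia.
- move=> a b ha hb; rewrite !TgenP ?hb //; last by lia.
  rewrite addn1; apply: HbrT => //; have := ltn_ord b; move: ha hb => /= ha hb; lia.
Qed.
End Hecke.

Lemma HeckeRelR_ext (K : fieldType) (q : K) m (Q : 'I_m -> K) n (B : pzRingType)
  (sc1 sc2 : K -> B) (X : 'I_n -> B) :
  (forall c, sc1 c = sc2 c) -> HeckeRelR q Q sc1 X -> HeckeRelR q Q sc2 X.
Proof.
move=> E [h1 h2 h3 h4 h5]; split => //.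
- by move=> a0 e; under eq_bigr do rewrite -E; exact: h1.
- by move=> a ha; rewrite -E; exact: h3.
Qed.

Section PsiLR.
Variables (K : fieldType) (A : lalgType K) (d : nat) (Psi : A -> 'M[K]_d.+1).
Hypothesis (H : is_alg_hom Psi).
Definition psiw : A -> 'M[K]_d.+1 := Psi.
Lemma psiw0 : psiw 0 = 0.
Proof. by case: H => _ _ _ hZ; rewrite /psiw -(scale0r 0) hZ scale0r. Qed.
HB.instance Definition _ := GRing.isNmodMorphism.Build A 'M[K]_d.+1 psiw
  (psiw0, (let: And4 _ _ hD _ := H in hD)).
HB.instance Definition _ := GRing.isMonoidMorphism.Build A 'M[K]_d.+1 psiw
  ((let: And4 h1 _ _ _ := H in h1), (let: And4 _ hM _ _ := H in hM)).
HB.instance Definition _ := GRing.isScalable.Build K A 'M[K]_d.+1 *:%R psiw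
  (let: And4 _ _ _ hZ := H in hZ).
Definition psiLR : {lrmorphism A -> 'M[K]_d.+1} := psiw.
End PsiLR.

Lemma part2 (K : fieldType) (q : K) m (Q : 'I_m -> K) n d (X : 'I_n -> 'M[K]_d.+1) :
  HeckeRelR q Q (@scalar_mx K d.+1) X ->
  forall (A : lalgType K) (g : 'I_n -> A), is_Hecke_presentation q Q g ->
  exists Phi : A -> 'M[K]_d.+1,
    [/\ is_alg_hom Phi, forall a, Phi (g a) = X a &
        forall Psi : A -> 'M[K]_d.+1,
          is_alg_hom Psi -> (forall a, Psi (g a) = X a) -> Psi =1 Phi].
Proof.
move=> HX A g [Hg Hu].
have HX' : HeckeRel q Q (B := 'M[K]_d.+1) X.
  by apply: HeckeRelR_ext HX => c; rewrite scalemx1.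
have [f [hf hu]] := Hu _ X HX'.
exists f; split => //.
- split.
  + exact: rmorph1.
  + exact: rmorphM.
  + exact: rmorphD.
  + exact: linearZZ.
- move=> Psi HPsi hP x.
  exact: (hu (psiLR HPsi) hP x).
Qed.

Import Num.Theory.
Lemma CC2 : (2%:R : CC) != 0.
Proof. by rewrite pnatr_eq0. Qed.
Lemma qK_neq0 m : qK m != 0.
Proof.
rewrite /qK tofrac_eq0; apply/eqP => h.
have := congr1 (fun p => p@_(U_(@ord0 m))) h.
by rewrite mcoeffXU eqxx mcoeff0 => /eqP; rewrite oner_eq0.
Qed.
Lemma KK2 m : (2%:R : KK m) != 0.
Proof.
rewrite -(rmorph_nat (@tofrac _)) tofrac_eq0.
by rewrite -mpolyC_nat mpolyC_eq0 CC2.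
Qed.

Theorem mainTheorem1 (m n : nat) (k l : 'I_m -> nat) :
  (0 < m)%N -> (0 < n)%N -> (0 < \sum_(c < m) (k c + l c))%N ->
  let T := Tgen (qK m) (QK (m:=m)) k l (n:=n) in
  (* T_0, ..., T_{n-1} satisfy the defining relations of H in End(V^{(x) n}) *)
  HeckeRelR (qK m) (QK (m:=m)) (@scalar_mx (KK m) (wdim k l n)) T
  /\
  (* g_a |-> T_a extends to a (unique) K-algebra homomorphism              *)
  (* H -> End_K(V^{(x) n}), for H given by any presentation (A, g)         *)
  (forall (A : lalgType (KK m)) (g : 'I_n -> A),
     is_Hecke_presentation (qK m) (QK (m:=m)) g ->
     exists Phi : A -> 'M[KK m]_(wdim k l n),
       [/\ is_alg_hom Phi, forall a, Phi (g a) = T a &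
           forall Psi : A -> 'M[KK m]_(wdim k l n),
             is_alg_hom Psi -> (forall a, Psi (g a) = T a) -> Psi =1 Phi]).
Proof.
move=> hm hn hN /=.
case: n hn => [//|n'] _.
have HR := @hecke (KK m) (qK m) m (QK (m:=m)) k l n' (qK_neq0 m) (KK2 m) hm.
split => //.
have [c hc] : exists c : 'I_m, (0 < k c + l c)%N.
  apply/existsP; apply: contraLR hN => /existsPn H.
  by rewrite -leqNgt leqn0 sum_nat_eq0; apply/forallP => c; move: (H c); rewrite -leqNgt leqn0.
pose x : Defs.vbasis k l := existT _ c (Ordinal hc).
have hw : (0 < wdim k l n'.+1)%N.
  by apply/card_gt0P; exists [ffun _ => x].
move: (Tgen (qK m) (QK (m:=m)) k l (n:=n'.+1)) HR.
move: (wdim k l n'.+1) hw => [//|d] _ X HX.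
exact: part2.
Qed.
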